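(* Let $(x,y,p)$ be an optimal solution of the RMP and let $(\alpha,\beta,\gamma,\delta,\mu,\phi,\psi)$ be an optimal solution of the DRMP (so both have the same objective value). Then: (a) There exists a cost-invariant lifting of $(\alpha,\beta,\gamma,\delta,\mu,\phi,\psi)$ that is fully compensating and feasible for the DMP if and only if the characteristic lifting $(\alpha,\check\beta,\gamma,\check\delta,\mu,\phi,\psi)$ is fully compensating and feasible for the DMP. (b) Suppose the following three families of inequalities hold: 1. $\bar c_{b,l,m}\ge 0$ for all $b\in\mathcal B$, $l\in L(b)$, $m\in\mathcal M\setminus M(b,l)$; 2. for all $l\in\mathcal L'\setminus\bigcap_{b\in\mathcal B}L(b)$: $$-\sum_{b\in\mathcal B:\ l\notin L(b)}\Bigl(\min_{m\in\mathcal M}\bar c_{b,l,m}\Bigr)^-\ \ge\ \sum_{b\in\mathcal B:\ l\in L(b)}\beta_{b,l}-\gamma-\delta_l+\chi_l\mu;$$ 3. for all $l\in\mathcal L\setminus\mathcal L'$: $$-\sum_{b\in\mathcal B}\Bigl(\min_{m\in\mathcal M}\bar c_{b,l,m}\Bigr)^-+\Bigl(\min_{b\in\mathcal B,\,m\in\mathcal M}\bar c_{b,l,m}\Bigr)^+\ \ge\ -\gamma+\mu.$$ Then the vector $(\bar x,\bar y,\bar p)$ obtained from $(x,y,p)$ by setting all variables of the MP that are absent from the RMP to zero is an optimal solution of the MP. Moreover, these three families hold if and only if the characteristic lifting is fully compensating and feasible for the DMP; consequently, if any one of these inequalities is violated, then no cost-invariant lifting of $(\alpha,\beta,\gamma,\delta,\mu,\phi,\psi)$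 is both fully compensating and feasible for the DMP.
   Context: Let $\mathcal B$ (branches) and $\mathcal S$ (sizes) be finite nonempty sets, $\mathcal M\subset\mathbb N$ a finite nonempty set of multiplicities, and $\mathcal L\subset\mathbb N^{\mathcal S}$ a finite nonempty set of lot-types; for $l\in\mathcal L$ write $|l|:=\sum_{s\in\mathcal S}l_s$. Let costs $c_{b,l,m}\ge 0$ ($b\in\mathcal B,l\in\mathcal L,m\in\mathcal M$), an integer $k\ge 0$, reals $\underline I\le\overline I$ and a constant $P>0$ be given. Let $\mathcal L''\subseteq\mathcal L'\subseteq\mathcal L$, for each $b\in\mathcal B$ let $L(b)\subseteq\mathcal L'$, and for each $b$ and $l\in L(b)$ let $M(b,l)\subseteq\mathcal M$ be nonempty. Put $\chi_l:=1$ if $l\notin\mathcal L''$ and $\chi_l:=0$ if $l\in\mathcal L''$. For real $t$, $(t)^+:=\max\{t,0\}$ and $(t)^-:=\max\{-t,0\}$. Master problem (MP): the linear program in variables $x_{b,l,m}\ge0$ ($b\in\mathcal B,l\in\mathcal L,m\in\mathcal M$), $y_l\ge0$ ($l\in\mathcal L$), $p\ge 0$: minimize $\sum_{b,l,m}c_{b,l,m}x_{b,l,m}+Pp$ subject to ($\alpha_b$) $\sum_{l,m}x_{b,l,m}=1$ for all $b$; ($\beta_{b,l}$) $y_l-\sum_m x_{b,l,m}\ge 0$ for all $b,l$; ($\gamma$) $-\sum_l y_l\ge -k$; ($\delta_l$) $\sum_{b,m}x_{b,l,m}-y_l\ge0$ for all $l$; ($\mu$) $\sum_{l\in\mathcal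 L\setminus\mathcal L''}y_l+p\ge1$; ($\phi$) $\sum_{b,l,m}m|l|x_{b,l,m}\ge\underline I$; ($\psi$) $-\sum_{b,l,m}m|l|x_{b,l,m}\ge-\overline I$. The symbol in parentheses names the dual variable of each constraint. Restricted master problem (RMP): the same LP but containing only the variables $x_{b,l,m}$ with $l\in L(b)$, $m\in M(b,l)$, the variables $y_l$ with $l\in\mathcal L'$, and $p$; only the $\beta_{b,l}$-constraints with $l\in L(b)$ and the $\delta_l$-constraints with $l\in\mathcal L'$ are kept, and all sums are restricted to the present variables. Dual master problem (DMP): variables $\alpha_b\in\mathbb R$, $\beta_{b,l}\ge0$ (all $b\in\mathcal B,l\in\mathcal L$), $\gamma\ge0$, $\delta_l\ge0$ (all $l\in\mathcal L$), $\mu\ge0$, $\phi,\psi\ge0$; maximize $\sum_b\alpha_b-k\gamma+\underline I\phi-\overline I\psi+\mu$ subject to the $x$-constraints $\alpha_b-\beta_{b,l}+\delta_l+m|l|(\phi-\psi)\le c_{b,l,m}$ for all $b,l,m$, the $y$-constraints $\sum_{b\in\mathcal B}\beta_{b,l}-\gamma-\delta_l+\chi_l\mu\le 0$ for all $l\in\mathcal L$, and the $p$-constraint $\mu\le P$. The dual restricted master problem (DRMP) is the LP dual of the RMP: variables $\alpha_b$, $\beta_{b,l}$ ($l\in L(b)$), $\gamma$, $\delta_l$ ($l\in\mathcal L'$), $\mu,\phi,\psi$ with the same sign conditions and objective, $x$-constraints only for $l\in L(b)$, $m\in M(b,l)$, $y$-constraints $\sum_{b:\,l\in L(b)}\beta_{b,l}-\gamma-\delta_l+\chi_l\mu\le0$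 for $l\in\mathcal L'$, and $\mu\le P$. Given a DRMP solution $(\alpha,\beta,\gamma,\delta,\mu,\phi,\psi)$: its canonical lifting sets $\bar\beta_{b,l}:=\beta_{b,l}$ if $l\in L(b)$ and $0$ otherwise, $\bar\delta_l:=\delta_l$ if $l\in\mathcal L'$ and $0$ otherwise. The (uncompensated) reduced cost is $\bar c_{b,l,m}:=c_{b,l,m}-\alpha_b+\bar\beta_{b,l}-\bar\delta_l-m|l|(\phi-\psi)$ for all $b\in\mathcal B,l\in\mathcal L,m\in\mathcal M$. A cost-invariant lifting is any assignment $(\hat\alpha,\hat\beta,\hat\gamma,\hat\delta,\hat\mu,\hat\phi,\hat\psi)$ of all DMP variables that coincides with $(\alpha,\beta,\gamma,\delta,\mu,\phi,\psi)$ on all DRMP components and whose DMP objective equals the DRMP objective of $(\alpha,\ldots,\psi)$. It is fully compensating if it satisfies all $x$-constraints of the DMP. The characteristic lifting is $(\alpha,\check\beta,\gamma,\check\delta,\mu,\phi,\psi)$ with $\check\beta_{b,l}:=\beta_{b,l}$ if $l\in L(b)$ and $\check\beta_{b,l}:=(\min_{m\in\mathcal M}\bar c_{b,l,m})^-$ if $l\in\mathcal L\setminus L(b)$; $\check\delta_l:=\delta_l$ if $l\in\mathcal L'$ and $\check\delta_l:=(\min_{b\in\mathcal B,m\in\mathcal M}\bar c_{b,l,m})^+$ if $l\in\mathcal L\setminus\mathcal L'$. *)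

(* Defs.v *)
From HB Require Import structures.
From mathcomp Require Import all_boot all_order all_algebra.
Set Implicit Arguments. Unset Strict Implicit. Unset Printing Implicit Defensive.
Import Order.TTheory GRing.Theory Num.Theory.
Local Open Scope ring_scope.

Definition pospart {R : realDomainType} (t : R) : R := Num.max t 0.
Definition negpart {R : realDomainType} (t : R) : R := Num.max (- t) 0.

(* minimum of f over a (nonempty) finite type T; the value 0 for an empty T
   is never used, since all the index types below are nonempty. *)
Definition minf {R : realDomainType} (T : finType) (f : T -> R) : R :=
  match enum T with
  | [::] => 0
  | t0 :: _ => \big[Num.min/f t0]_(i : T) f i
  end.

Section MasterProblem.
Context {R : realFieldType} {B S Mt Lt : finType}.
(* mval m : multiplicity in N of m in M;  lval l s : entry of the lot-type l in N^S *)
Variables (mval : Mt -> nat) (lval : Lt -> S -> nat).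
Variables (c : B -> Lt -> Mt -> R) (k : nat) (Ilo Ihi P : R).
Variable (L'' : {set Lt}).

Definition lsize (l : Lt) : nat := (\sum_(s : S) lval l s)%N.
Definition coef (m : Mt) (l : Lt) : R := (mval m * lsize l)%:R.
Definition chi (l : Lt) : R := if l \in L'' then 0 else 1.

(* ---------- Primal LP with present variables given by Lb, Mb, L'
   (RMP; the MP is the special case where everything is present).
   Variables x, y are total functions; components of absent variables are
   ignored. *)
Definition prim_feasible (Lb : B -> {set Lt}) (Mb : B -> Lt -> {set Mt})
    (L' : {set Lt}) (x : B -> Lt -> Mt -> R) (y : Lt -> R) (p : R) : Prop :=
  (forall b l m, l \in Lb b -> m \in Mb b l -> 0 <= x b l m) /\
  (forall l, l \in L' -> 0 <= y l) /\
  0 <= p /\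
  (* alpha_b *)
  (forall b, \sum_(l in Lb b) \sum_(m in Mb b l) x b l m = 1) /\
  (* beta_{b,l} *)
  (forall b l, l \in Lb b -> 0 <= y l - \sum_(m in Mb b l) x b l m) /\
  (* gamma *)
  - (k%:R) <= - \sum_(l in L') y l /\
  (* delta_l *)
  (forall l, l \in L' ->
     0 <= \sum_(b : B | l \in Lb b) \sum_(m in Mb b l) x b l m - y l) /\
  (* mu *)
  1 <= \sum_(l in L' :\: L'') y l + p /\
  (* phi *)
  Ilo <= \sum_(b : B) \sum_(l in Lb b) \sum_(m in Mb b l) coef m l * x b l m /\
  (* psi *)
  - Ihi <= - \sum_(b : B) \sum_(l in Lb b) \sum_(m in Mb b l) coef m l * x b l m.

Definition prim_obj (Lb : B -> {set Lt}) (Mb : B -> Lt -> {set Mt})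
    (x : B -> Lt -> Mt -> R) (p : R) : R :=
  \sum_(b : B) \sum_(l in Lb b) \sum_(m in Mb b l) c b l m * x b l m + P * p.

Definition prim_optimal Lb Mb L' x y p : Prop :=
  prim_feasible Lb Mb L' x y p /\
  forall x' y' p', prim_feasible Lb Mb L' x' y' p' ->
    prim_obj Lb Mb x p <= prim_obj Lb Mb x' p'.

Definition mp_optimal x y p : Prop :=
  prim_optimal (fun _ => setT) (fun _ _ => setT) setT x y p.

Definition dual_xcons (alpha : B -> R) (beta : B -> Lt -> R) (delta : Lt -> R)
    (phi psi : R) (b : B) (l : Lt) (m : Mt) : Prop :=
  alpha b - beta b l + delta l + coef m l * (phi - psi) <= c b l m.

Definition dual_feasible (Lb : B -> {set Lt}) (Mb : B -> Lt -> {set Mt})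
    (L' : {set Lt}) (alpha : B -> R) (beta : B -> Lt -> R) (gamma : R)
    (delta : Lt -> R) (mu phi psi : R) : Prop :=
  (forall b l, l \in Lb b -> 0 <= beta b l) /\
  0 <= gamma /\
  (forall l, l \in L' -> 0 <= delta l) /\
  0 <= mu /\ 0 <= phi /\ 0 <= psi /\
  (forall b l m, l \in Lb b -> m \in Mb b l ->
     dual_xcons alpha beta delta phi psi b l m) /\
  (forall l, l \in L' ->
     \sum_(b : B | l \in Lb b) beta b l - gamma - delta l + chi l * mu <= 0) /\
  mu <= P.

Definition dual_obj (alpha : B -> R) (gamma mu phi psi : R) : R :=
  \sum_(b : B) alpha b - k%:R * gamma + Ilo * phi - Ihi * psi + mu.

Definition dual_optimal Lb Mb L' alpha beta gamma delta mu phi psi : Prop :=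
  dual_feasible Lb Mb L' alpha beta gamma delta mu phi psi /\
  forall alpha' beta' gamma' delta' mu' phi' psi',
    dual_feasible Lb Mb L' alpha' beta' gamma' delta' mu' phi' psi' ->
    dual_obj alpha' gamma' mu' phi' psi' <= dual_obj alpha gamma mu phi psi.

Definition dmp_feasible alpha beta gamma delta mu phi psi : Prop :=
  dual_feasible (fun _ => setT) (fun _ _ => setT) setT
    alpha beta gamma delta mu phi psi.

Definition fully_compensating alpha beta delta phi psi : Prop :=
  forall b l m, dual_xcons alpha beta delta phi psi b l m.

Definition cost_invariant_lifting (Lb : B -> {set Lt}) (L' : {set Lt})
    (alpha : B -> R) (beta : B -> Lt -> R) (gamma : R) (delta : Lt -> R)
    (mu phi psi : R)
    (alpha' : B -> R) (beta' : B -> Lt -> R) (gamma' : R) (delta' : Lt -> R)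
    (mu' phi' psi' : R) : Prop :=
  alpha' = alpha /\ gamma' = gamma /\ mu' = mu /\ phi' = phi /\ psi' = psi /\
  (forall b l, l \in Lb b -> beta' b l = beta b l) /\
  (forall l, l \in L' -> delta' l = delta l) /\
  dual_obj alpha' gamma' mu' phi' psi' = dual_obj alpha gamma mu phi psi.

Definition beta_bar (Lb : B -> {set Lt}) (beta : B -> Lt -> R) b l : R :=
  if l \in Lb b then beta b l else 0.
Definition delta_bar (L' : {set Lt}) (delta : Lt -> R) l : R :=
  if l \in L' then delta l else 0.

Definition redcost (Lb : B -> {set Lt}) (L' : {set Lt}) (alpha : B -> R)
    (beta : B -> Lt -> R) (delta : Lt -> R) (phi psi : R) b l m : R :=
  c b l m - alpha b + beta_bar Lb beta b l - delta_bar L' delta l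
    - coef m l * (phi - psi).

Definition beta_check (Lb : B -> {set Lt}) (L' : {set Lt}) (alpha : B -> R)
    (beta : B -> Lt -> R) (delta : Lt -> R) (phi psi : R) (b : B) (l : Lt) : R :=
  if l \in Lb b then beta b l
  else negpart (minf (fun m : Mt => redcost Lb L' alpha beta delta phi psi b l m)).
Definition delta_check (Lb : B -> {set Lt}) (L' : {set Lt}) (alpha : B -> R)
    (beta : B -> Lt -> R) (delta : Lt -> R) (phi psi : R) (l : Lt) : R :=
  if l \in L' then delta l
  else pospart (minf (fun bm : B * Mt =>
                        redcost Lb L' alpha beta delta phi psi bm.1 l bm.2)).

End MasterProblem.

(* Main.v *)
Require Import Defs.
From HB Require Import structures.
From mathcomp Require Import all_boot all_order all_algebra.
From mathcomp Require Import ring lra.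
Set Implicit Arguments. Unset Strict Implicit. Unset Printing Implicit Defensive.
Import Order.TTheory GRing.Theory Num.Theory.
Local Open Scope ring_scope.

Section Helpers.
Variable R : realFieldType.

Lemma negpart_ge0 (t : R) : 0 <= negpart t.
Proof. rewrite /negpart; case: (lerP (-t) 0) => h; lra. Qed.
Lemma negpart_geN (t : R) : - t <= negpart t.
Proof. rewrite /negpart; case: (lerP (-t) 0) => h; lra. Qed.
Lemma negpart_le (t a : R) : 0 <= a -> - t <= a -> negpart t <= a.
Proof. rewrite /negpart; case: (lerP (-t) 0) => h; lra. Qed.
Lemma pospart_ge0 (t : R) : 0 <= pospart t.
Proof. rewrite /pospart; case: (lerP t 0) => h; lra. Qed.
Lemma pospart_ge (t : R) : t <= pospart t.
Proof. rewrite /pospart; case: (lerP t 0) => h; lra. Qed.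
Lemma pospart_le (t a : R) : 0 <= a -> t <= a -> pospart t <= a.
Proof. rewrite /pospart; case: (lerP t 0) => h; lra. Qed.

Lemma minf_le (T : finType) (f : T -> R) i : minf f <= f i.
Proof.
rewrite /minf; have: i \in enum T by rewrite mem_enum.
case: (enum T) => [//|t0 _ _]; exact: bigmin_le.
Qed.

Lemma minf_att (T : finType) (f : T -> R) (i0 : T) : exists i, minf f = f i.
Proof.
rewrite /minf; have: i0 \in enum T by rewrite mem_enum.
case: (enum T) => [//|t0 _ _].
apply: (big_ind (fun v => exists i, v = f i)); first by exists t0.
- move=> a b [i ->] [j ->]; case: lerP => _; [by exists i|by exists j].
- by move=> i _; exists i.
Qed.

Lemma lin_sum (I : finType) (P : pred I) (F G : I -> R) (a b : R) :
  \sum_(i | P i) (a * F i + b * G i) = a * \sum_(i | P i) F i + b * \sum_(i | P i) G i.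
Proof. by rewrite big_split /= !mulr_sumr. Qed.

Lemma sum_setT (I : finType) (F : I -> R) : \sum_(i in [set: I]) F i = \sum_i F i.
Proof. by apply: eq_bigl => i; rewrite in_setT. Qed.

End Helpers.
Section WD.
Variables (R : realFieldType) (B S Mt Lt : finType).
Variables (mval : Mt -> nat) (lval : Lt -> S -> nat).
Variables (c : B -> Lt -> Mt -> R) (k : nat) (Ilo Ihi P : R).
Variable (L'' : {set Lt}).

Lemma sum2_split (F G : B -> Lt -> R) :
  \sum_b \sum_l (F b l + G b l) = \sum_b \sum_l F b l + \sum_b \sum_l G b l.
Proof. rewrite -big_split; apply: eq_bigr => b _; by rewrite big_split. Qed.

Lemma weak_dual x y p al be ga de mu ph ps :
  prim_feasible mval lval k Ilo Ihi L'' (fun _ => setT) (fun _ _ => setT) setT x y p ->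
  dual_feasible mval lval c P L'' (fun _ => setT) (fun _ _ => setT) setT al be ga de mu ph ps ->
  dual_obj k Ilo Ihi al ga mu ph ps <= prim_obj c P (fun _ => setT) (fun _ _ => setT) x p.
Proof.
case=> hx [hy [hp [hal [hbe [hga [hde [hmu [hphi hpsi]]]]]]]].
case=> hb [hg [hd [hm [hph [hps [hxc [hyc hmP]]]]]]].
rewrite /dual_obj /prim_obj.
set X := fun b l => \sum_m x b l m.
set C := fun b l => \sum_m coef mval lval m l * x b l m.
set T := \sum_b \sum_l C b l.
set Y := \sum_l y l.
set Z := \sum_l chi L'' l * y l.
have eC : \sum_b \sum_(l in [set: Lt]) \sum_(m in [set: Mt]) coef mval lval m l * x b l m = T.
  apply: eq_bigr => b _; rewrite sum_setT; apply: eq_bigr => l _; by rewrite sum_setT.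
rewrite eC in hphi hpsi.
have hal' : forall b, \sum_l X b l = 1.
  move=> b; rewrite -(hal b) sum_setT; apply: eq_bigr => l _; by rewrite sum_setT.
have hbe' : forall b l, X b l <= y l.
  move=> b l; have := hbe b l (in_setT l); rewrite sum_setT /X; lra.
have hde' : forall l, y l <= \sum_b X b l.
  move=> l; have := hde l (in_setT l).
  have -> : \sum_(b | l \in [set: Lt]) \sum_(m in [set: Mt]) x b l m = \sum_b X b l.
    by apply: eq_big => [b|b _]; rewrite ?in_setT // sum_setT.
  lra.
have hga' : Y <= k%:R by move: hga; rewrite sum_setT -/Y; lra.
have hmu' : 1 <= Z + p.
  suff -> : Z = \sum_(l in [set: Lt] :\: L'') y l by [].
  rewrite /Z [RHS]big_mkcond; apply: eq_bigr => l _; rewrite /chi !inE andbT.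
  by case: (l \in L'') => /=; rewrite ?mul0r ?mul1r.
have hyc' : forall l, \sum_b be b l <= ga + de l - chi L'' l * mu.
  move=> l; have := hyc l (in_setT l).
  have -> : \sum_(b | l \in [set: Lt]) be b l = \sum_b be b l.
    by apply: eq_bigl => b; rewrite in_setT.
  lra.
have step1 : \sum_b \sum_l ((al b - be b l + de l) * X b l + (ph - ps) * C b l)
   <= \sum_b \sum_(l in [set: Lt]) \sum_(m in [set: Mt]) c b l m * x b l m.
  apply: ler_sum => b _; rewrite sum_setT; apply: ler_sum => l _.
  rewrite sum_setT /X /C -lin_sum; apply: ler_sum => m _.
  have := hxc b l m (in_setT l) (in_setT m); rewrite /dual_xcons => h.
  have hx0 := hx b l m (in_setT l) (in_setT m).
  rewrite -subr_ge0.
  have -> : c b l m * x b l m - ((al b - be b l + de l) * x b l m +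
     (ph - ps) * (coef mval lval m l * x b l m)) =
     (c b l m - (al b - be b l + de l + coef mval lval m l * (ph - ps))) * x b l m by ring.
  apply: mulr_ge0 => //; lra.
have step2 : \sum_b \sum_l (al b * X b l + de l * X b l + - (be b l * y l) + (ph - ps) * C b l)
   <= \sum_b \sum_l ((al b - be b l + de l) * X b l + (ph - ps) * C b l).
  apply: ler_sum => b _; apply: ler_sum => l _.
  have := hbe' b l; have hb0 := hb b l (in_setT l) => h.
  have : be b l * X b l <= be b l * y l by apply: ler_wpM2l.
  lra.
have e2 : \sum_b \sum_l (al b * X b l + de l * X b l + - (be b l * y l) + (ph - ps) * C b l)
   = \sum_b al b + \sum_l de l * \sum_b X b l - \sum_l y l * \sum_b be b l + (ph - ps) * T.
  rewrite !sum2_split.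
  have -> : \sum_b \sum_l al b * X b l = \sum_b al b.
    by apply: eq_bigr => b _; rewrite -mulr_sumr hal' mulr1.
  have -> : \sum_b \sum_l de l * X b l = \sum_l de l * \sum_b X b l.
    rewrite exchange_big; apply: eq_bigr => l _; by rewrite mulr_sumr.
  have -> : \sum_b \sum_l - (be b l * y l) = - \sum_l y l * \sum_b be b l.
    rewrite exchange_big -sumrN; apply: eq_bigr => l _; rewrite mulr_sumr -sumrN.
    by apply: eq_bigr => b _; rewrite mulrC.
  have -> : \sum_b \sum_l (ph - ps) * C b l = (ph - ps) * T.
    rewrite /T mulr_sumr; apply: eq_bigr => b _; by rewrite mulr_sumr.
  done.
have step3 : - ga * Y + mu * Z <= \sum_l de l * \sum_b X b l - \sum_l y l * \sum_b be b l.
  have -> : - ga * Y + mu * Z = \sum_l (de l * y l - y l * (ga + de l - chi L'' l * mu)).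
    rewrite /Y /Z mulr_sumr mulr_sumr -big_split; apply: eq_bigr => l _ /=; ring.
  rewrite -sumrB; apply: ler_sum => l _.
  have h1 : de l * y l <= de l * \sum_b X b l.
    apply: ler_wpM2l; [exact: hd l (in_setT l)|exact: hde'].
  have h2 : y l * \sum_b be b l <= y l * (ga + de l - chi L'' l * mu).
    apply: ler_wpM2l; [exact: hy l (in_setT l)|exact: hyc'].
  lra.
have p1 : 0 <= ga * (k%:R - Y) by apply: mulr_ge0 => //; lra.
have p2 : 0 <= mu * (Z + p - 1) by apply: mulr_ge0 => //; lra.
have p3 : 0 <= (P - mu) * p by apply: mulr_ge0 => //; lra.
have p4 : 0 <= ph * (T - Ilo) by apply: mulr_ge0 => //; lra.
have p5 : 0 <= ps * (Ihi - T) by apply: mulr_ge0 => //; lra.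
rewrite e2 in step2.
have hX : k%:R * ga = ga * k%:R by rewrite mulrC.
move: p1 p2 p3 p4 p5 step1 step2 step3.
set SC := \sum_b \sum_(l in [set: Lt]) _.
set A1 := \sum_l de l * _.
set A2 := \sum_l y l * _.
set SA := \sum_b al b.
move=> p1 p2 p3 p4 p5 s1 s2 s3.
nra.
Qed.
End WD.
Theorem theorem1
  (R : realFieldType) (B S Mt Lt : finType)
  (* nonempty finite index sets; M ⊂ N and L ⊂ N^S given by injective labels *)
  (hB : (0 < #|B|)%N) (hS : (0 < #|S|)%N) (hM : (0 < #|Mt|)%N) (hL : (0 < #|Lt|)%N)
  (mval : Mt -> nat) (hmval : injective mval)
  (lval : Lt -> S -> nat) (hlval : injective lval)
  (c : B -> Lt -> Mt -> R) (hc : forall b l m, 0 <= c b l m)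
  (k : nat) (Ilo Ihi : R) (hI : Ilo <= Ihi) (P : R) (hP : 0 < P)
  (L'' L' : {set Lt}) (hL'' : L'' \subset L')
  (Lb : B -> {set Lt}) (hLb : forall b, Lb b \subset L')
  (Mb : B -> Lt -> {set Mt}) (hMb : forall b l, l \in Lb b -> Mb b l != set0)
  (* optimal RMP solution (components of absent variables are irrelevant) *)
  (x : B -> Lt -> Mt -> R) (y : Lt -> R) (p : R)
  (hx : prim_optimal mval lval c k Ilo Ihi P L'' Lb Mb L' x y p)
  (* optimal DRMP solution *)
  (alpha : B -> R) (beta : B -> Lt -> R) (gamma : R) (delta : Lt -> R)
  (mu phi psi : R)
  (hd : dual_optimal mval lval c k Ilo Ihi P L'' Lb Mb L'
          alpha beta gamma delta mu phi psi)
  (* both have the same objective value *)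
  (hobj : prim_obj c P Lb Mb x p = dual_obj k Ilo Ihi alpha gamma mu phi psi) :
  let cbar := redcost mval lval c Lb L' alpha beta delta phi psi in
  let betac := beta_check mval lval c Lb L' alpha beta delta phi psi in
  let deltac := delta_check mval lval c Lb L' alpha beta delta phi psi in
  (* some cost-invariant lifting is fully compensating and DMP-feasible *)
  let good_lifting_exists :=
    exists (alpha' : B -> R) (beta' : B -> Lt -> R) (gamma' : R)
           (delta' : Lt -> R) (mu' phi' psi' : R),
      cost_invariant_lifting k Ilo Ihi Lb L' alpha beta gamma delta mu phi psi
        alpha' beta' gamma' delta' mu' phi' psi' /\
      fully_compensating mval lval c alpha' beta' delta' phi' psi' /\
      dmp_feasible mval lval c P L'' alpha' beta' gamma' delta' mu' phi' psi' in
  (* the characteristic lifting is fully compensating and DMP-feasible *)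
  let char_good :=
    fully_compensating mval lval c alpha betac deltac phi psi /\
    dmp_feasible mval lval c P L'' alpha betac gamma deltac mu phi psi in
  let cond1 := forall b l m, l \in Lb b -> m \notin Mb b l -> 0 <= cbar b l m in
  let cond2 := forall l, l \in L' :\: \bigcap_(b : B) Lb b ->
      - \sum_(b : B | l \notin Lb b) negpart (minf (fun m : Mt => cbar b l m))
      >= \sum_(b : B | l \in Lb b) beta b l - gamma - delta l + chi L'' l * mu in
  let cond3 := forall l, l \in ~: L' ->
      - \sum_(b : B) negpart (minf (fun m : Mt => cbar b l m))
        + pospart (minf (fun bm : B * Mt => cbar bm.1 l bm.2))
      >= - gamma + mu in
  let xbar := fun b l m => if (l \in Lb b) && (m \in Mb b l) then x b l m else 0 in
  let ybar := fun l => if l \in L' then y l else 0 in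
  (* (a) *)
  (good_lifting_exists <-> char_good) /\
  (* (b) *)
  ((cond1 /\ cond2 /\ cond3) -> mp_optimal mval lval c k Ilo Ihi P L'' xbar ybar p) /\
  ((cond1 /\ cond2 /\ cond3) <-> char_good) /\
  (~ (cond1 /\ cond2 /\ cond3) -> ~ good_lifting_exists).
Proof.
move=> cbar betac deltac good char_good cond1 cond2 cond3 xbar ybar.
have [hxf _] := hx. have [hdf _] := hd.
case: (hdf) => hb [hg [hd' [hm [hph [hps [hxc [hyc hmP]]]]]]].
case/card_gt0P: hB => bw _.
case/card_gt0P: hM => mw _.
have sL : forall b l, l \in Lb b -> l \in L' by move=> b l; apply: (subsetP (hLb b)).
have sL'' : forall l, l \in L'' -> l \in L' by move=> l; apply: (subsetP hL'').
have ecbar : forall b l m, cbar b l m = c b l m - alpha b + (if l \in Lb b then beta b l else 0)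
   - (if l \in L' then delta l else 0) - coef mval lval m l * (phi - psi) by [].
have ebetac : forall b l, betac b l = if l \in Lb b then beta b l
   else negpart (minf (fun m => cbar b l m)) by [].
have edeltac : forall l, deltac l = if l \in L' then delta l
   else pospart (minf (fun bm : B * Mt => cbar bm.1 l bm.2)) by [].
have esum : forall l, \sum_(b | l \in [set: Lt]) betac b l =
   \sum_(b | l \in Lb b) beta b l + \sum_(b | l \notin Lb b) negpart (minf (fun m => cbar b l m)).
  move=> l; rewrite (eq_bigl xpredT) => [|b]; last by rewrite in_setT.
  rewrite (bigID (fun b => l \in Lb b)) /=; congr (_ + _); apply: eq_bigr => b hl.
    by rewrite ebetac hl.
  by rewrite ebetac (negbTE hl).
have chi1 : forall l : Lt, l \notin L' -> chi L'' l = 1 :> R.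
  move=> l hl; rewrite /chi; case h: (l \in L'') => //.
  by move: hl; rewrite (sL'' l h).

have Gmin : forall l b m, minf (fun bm : B * Mt => cbar bm.1 l bm.2) <= cbar b l m.
  by move=> l b m; exact: (minf_le (fun bm : B * Mt => cbar bm.1 l bm.2) (b, m)).
have C2Y : cond1 /\ cond2 /\ cond3 -> char_good.
  case=> c1 [c2 c3].
  have fc : fully_compensating mval lval c alpha betac deltac phi psi.
    move=> b l m; rewrite /dual_xcons ebetac edeltac.
    case hl: (l \in Lb b).
      rewrite (sL b l hl).
      case hmm: (m \in Mb b l); first by have := hxc b l m hl hmm.
      have := c1 b l m hl (negbT hmm); rewrite ecbar hl (sL b l hl); lra.
    set mb := minf _.
    have h1 := negpart_geN mb; have h0 := negpart_ge0 mb.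
    have h2 : mb <= cbar b l m by exact: minf_le.
    have e := ecbar b l m; rewrite hl in e.
    case hl': (l \in L'); rewrite hl' in e; first lra.
    set G := minf _.
    have hG : G <= cbar b l m by exact: Gmin.
    case: (lerP 0 (cbar b l m)) => hc0.
      have := pospart_le hc0 hG; lra.
    have : pospart G <= 0 by apply: pospart_le => //; lra.
    lra.
  split=> //.
  split; first by move=> b l _; rewrite ebetac; case: ifP => [/hb|_]; [|exact: negpart_ge0].
  split=> //.
  split; first by move=> l _; rewrite edeltac; case: ifP => [/hd'|_]; [|exact: pospart_ge0].
  do 3 (split=> //).
  split; first by move=> b l m _ _; exact: fc.
  split=> // l _; rewrite esum edeltac.
  case hl': (l \in L'); last first.
    have e1 : \sum_(b | l \in Lb b) beta b l = 0.
      apply: big1 => b hl; by move: hl'; rewrite (sL b l hl).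
    have e2 : \sum_(b | l \notin Lb b) negpart (minf (fun m => cbar b l m))
            = \sum_b negpart (minf (fun m => cbar b l m)).
      apply: eq_bigl => b; case hl: (l \in Lb b) => //; by move: hl'; rewrite (sL b l hl).
    have hl3 : l \in ~: L' by rewrite inE hl'.
    have := c3 l hl3; rewrite e1 e2 (chi1 l (negbT hl')); lra.
  case hcap: (l \in \bigcap_b Lb b).
    have e0 : \sum_(b | l \notin Lb b) negpart (minf (fun m => cbar b l m)) = 0.
      apply: big1 => b; move/bigcapP: hcap => /(_ b isT) ->; done.
    have := hyc l hl'; rewrite e0; lra.
  have hl2 : l \in L' :\: \bigcap_b Lb b by rewrite inE hcap hl'.
  have := c2 l hl2; lra.

have Y2C : char_good -> cond1 /\ cond2 /\ cond3.
  case=> fc [_ [_ [_ [_ [_ [_ [_ [hy _]]]]]]]].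
  split.
    move=> b l m hl _; have := fc b l m; rewrite /dual_xcons ebetac edeltac ecbar hl (sL b l hl); lra.
  split.
    move=> l; rewrite inE => /andP [_ hl']; have := hy l (in_setT l).
    rewrite esum edeltac hl'; lra.
  move=> l; rewrite inE => hl'; have := hy l (in_setT l).
  rewrite esum edeltac (negbTE hl') (chi1 l hl').
  have e1 : \sum_(b | l \in Lb b) beta b l = 0.
    apply: big1 => b hl; by move: hl'; rewrite (sL b l hl).
  have e2 : \sum_(b | l \notin Lb b) negpart (minf (fun m => cbar b l m))
          = \sum_b negpart (minf (fun m => cbar b l m)).
    apply: eq_bigl => b; case hl: (l \in Lb b) => //; by move: hl'; rewrite (sL b l hl).
  rewrite e1 e2; lra.
have C2G : char_good -> good.
  move=> cg; exists alpha, betac, gamma, deltac, mu, phi, psi; split; last exact: cg.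
  do 5 (split=> //).
  split; first by move=> b l hl; rewrite ebetac hl.
  split=> //; by move=> l hl; rewrite edeltac hl.
have G2C : good -> cond1 /\ cond2 /\ cond3.
  case=> al' [be' [ga' [de' [mu' [ph' [ps' [[eal [ega [emu [eph [eps [ebe [ede _]]]]]]] [hfc hdmp]]]]]]]].
  subst al' ga' mu' ph' ps'.
  case: hdmp => hb' [_ [hd'' [_ [_ [_ [_ [hyc' _]]]]]]].
  have hb0 : forall b l, 0 <= be' b l by move=> b l; exact: hb' b l (in_setT l).
  have hd0 : forall l, 0 <= de' l by move=> l; exact: hd'' l (in_setT l).
  have eS : forall l, \sum_(b | l \in [set: Lt]) be' b l = \sum_b be' b l.
    by move=> l; apply: eq_bigl => b; rewrite in_setT.
  split.
    move=> b l m hl _; have := hfc b l m; rewrite /dual_xcons ecbar hl (sL b l hl) ebe // ede ?(sL b l hl) //; lra.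
  split.
    move=> l; rewrite inE => /andP [_ hl']; have := hyc' l (in_setT l).
    rewrite eS (bigID (fun b => l \in Lb b)) /= ede //.
    have e1 : \sum_(b | l \in Lb b) be' b l = \sum_(b | l \in Lb b) beta b l.
      by apply: eq_bigr => b hl; rewrite ebe.
    have e2 : \sum_(b | l \notin Lb b) negpart (minf (fun m => cbar b l m))
        <= \sum_(b | l \notin Lb b) be' b l.
      apply: ler_sum => b hl; apply: negpart_le => //.
      case: (minf_att (fun m => cbar b l m) mw) => m0 ->.
      have := hfc b l m0; rewrite /dual_xcons ecbar (negbTE hl) hl' ede //; lra.
    rewrite e1; lra.
  move=> l; rewrite inE => hl'; have := hyc' l (in_setT l).
  rewrite eS (chi1 l hl').
  case: (minf_att (fun bm : B * Mt => cbar bm.1 l bm.2) (bw, mw)) => [[b0 m0]] /= hG.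
  set G := minf _ in hG *.
  rewrite (bigD1 b0) //= [X in _ <= - X + _](bigD1 b0) //=.
  have nL : forall b, l \in Lb b = false.
    move=> b; case hl: (l \in Lb b) => //; by move: hl'; rewrite (sL b l hl).
  have e2 : \sum_(b | b != b0) negpart (minf (fun m => cbar b l m))
        <= \sum_(b | b != b0) be' b l.
    apply: ler_sum => b _; apply: negpart_le => //.
    case: (minf_att (fun m => cbar b l m) mw) => m1 ->.
    have := hfc b l m1; rewrite /dual_xcons ecbar nL (negbTE hl'); have := hd0 l; lra.
  case: (minf_att (fun m => cbar b0 l m) mw) => m1 hm1.
  have hGm := Gmin l b0 m1; rewrite -/G in hGm.
  have hf := hfc b0 l m0; move: hf; rewrite /dual_xcons.
  have ec := ecbar b0 l m0; rewrite nL (negbTE hl') in ec.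
  move=> hf.
  have hp1 := pospart_ge G; have hp0 := pospart_ge0 G.
  have e3 : negpart (minf (fun m => cbar b0 l m)) <= be' b0 l - de' l + pospart G.
    apply: negpart_le; rewrite ?hm1; lra.
  lra.

have sbar : forall (F : Lt -> Mt -> R) b,
    \sum_(l in [set: Lt]) \sum_(m in [set: Mt]) F l m * xbar b l m
  = \sum_(l in Lb b) \sum_(m in Mb b l) F l m * x b l m.
  move=> F b; rewrite sum_setT [RHS]big_mkcond; apply: eq_bigr => l _.
  rewrite sum_setT /xbar; case hl: (l \in Lb b) => /=.
    rewrite [RHS]big_mkcond; apply: eq_bigr => m _; case: (m \in Mb b l) => //.
    by rewrite mulr0.
  by apply: big1 => m _; rewrite mulr0.
have sbar1 : forall b l, \sum_(m in [set: Mt]) xbar b l m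
   = if l \in Lb b then \sum_(m in Mb b l) x b l m else 0.
  move=> b l; rewrite sum_setT /xbar; case hl: (l \in Lb b) => /=.
    by rewrite [RHS]big_mkcond.
  by apply: big1.
have OPT : cond1 /\ cond2 /\ cond3 -> mp_optimal mval lval c k Ilo Ihi P L'' xbar ybar p.
  move=> cs; have cg := C2Y cs.
  case: hxf => hx0 [hy0 [hp0 [hal [hbe [hga [hde [hmu [hphi hpsi]]]]]]]].
  have eT : \sum_b \sum_(l in [set: Lt]) \sum_(m in [set: Mt]) coef mval lval m l * xbar b l m
     = \sum_b \sum_(l in Lb b) \sum_(m in Mb b l) coef mval lval m l * x b l m.
    by apply: eq_bigr => b _; rewrite (sbar (fun l m => coef mval lval m l)).
  have feas : prim_feasible mval lval k Ilo Ihi L'' (fun _ => setT) (fun _ _ => setT) setT xbar ybar p.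
    split.
      move=> b l m _ _; rewrite /xbar; case: ifP => [/andP [hl hmm]|_] //; exact: hx0.
    split; first by move=> l _; rewrite /ybar; case: ifP => [/hy0|_].
    split=> //.
    split.
      move=> b; rewrite -(hal b) sum_setT [RHS]big_mkcond; apply: eq_bigr => l _.
      by rewrite sbar1.
    split.
      move=> b l _; rewrite sbar1 /ybar; case hl: (l \in Lb b).
        by rewrite (sL b l hl); exact: hbe.
      rewrite subr0; case: ifP => // /hy0 //.
    split.
      suff -> : \sum_(l in [set: Lt]) ybar l = \sum_(l in L') y l by [].
      by rewrite sum_setT [RHS]big_mkcond.
    split.
      move=> l _.
      have -> : \sum_(b | l \in [set: Lt]) \sum_(m in [set: Mt]) xbar b l m
          = \sum_(b | l \in Lb b) \sum_(m in Mb b l) x b l m.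
        rewrite (eq_bigl xpredT) => [|b]; last by rewrite in_setT.
        rewrite [RHS]big_mkcond; apply: eq_bigr => b _; by rewrite sbar1.
      rewrite /ybar; case hl': (l \in L'); first exact: hde.
      rewrite big_pred0 ?subr0 // => b; case hl: (l \in Lb b) => //; by move: hl'; rewrite (sL b l hl).
    split.
      suff -> : \sum_(l in [set: Lt] :\: L'') ybar l = \sum_(l in L' :\: L'') y l by [].
      rewrite big_mkcond [RHS]big_mkcond; apply: eq_bigr => l _; rewrite /ybar !inE.
      by case: (l \in L'') => //=; case: (l \in L').
    by rewrite eT.
  split=> // x' y' p' hf'.
  have := weak_dual hf' (cg.2); rewrite -hobj.
  suff -> : prim_obj c P (fun=> [set: Lt]) (fun=> fun=> [set: Mt]) xbar p = prim_obj c P Lb Mb x p by [].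
  rewrite /prim_obj; congr (_ + _); apply: eq_bigr => b _; exact: (sbar (fun l m => c b l m)).
split.
  split; [move=> g; exact: C2Y (G2C g)|exact: C2G].
split; first exact: OPT.
split; first by split; [exact: C2Y|exact: Y2C].
by move=> nc g; apply: nc; exact: G2C.
Qed.
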